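(* Suppose Assumption ($\lambda$) holds. For every $\epsilon\in(0,1)$, every $k\ge1$ and every monotone menu $M$ with $k$ items, there exists a menu $M'$ such that: $M'$ has at most $k$ items; for each $(q,p)\in M'$, $p$ is an integer multiple of $\epsilon$ and $q=\epsilon(1+\epsilon)^\ell$ for some integer $\ell\ge0$; and $\operatorname{Rev}(M')\ge\operatorname{Rev}(M)-O((k+\lambda)\epsilon)$.
   Context: Non-linear pricing problem: a seller faces a buyer of type $\theta$ drawn from a known prior; the buyer's value for quantity $q\in[0,1]$ is $v(q;\theta)$, concave (not necessarily monotone) in $q$ with $v(0;\theta)=0$ and $v\le1$, satisfying strict single-crossing: for $\theta_1<\theta_2$, $q_1<q_2$, $v(q_2;\theta_2)-v(q_1;\theta_2)>v(q_2;\theta_1)-v(q_1;\theta_1)$. The seller commits to a menu $M$ of (quantity, price) pairs (the trivial option $(0,0)$ is always available and not counted in the menu size); the buyer selects a pair maximizing $v(q;\theta)-p$. $\operatorname{Rev}(M)$ is the seller's expected revenue (expected price collected, net of a constant cost $c\ge0$ per non-zero quantity sold). A menu is monotone if for all $(q_i,p_i),(q_j,p_j)\in M$ with $q_i<q_j$ we have $p_i\le p_j$. Assumption ($\lambda$): there exists $\lambda>0$ such that $\frac{d}{dq}v(0;\theta)<\lambda$ for all $\theta$. *)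

(* Defs.v *)
From HB Require Import structures.
From mathcomp Require Import all_boot all_order all_algebra.
From mathcomp Require Import all_classical all_reals all_analysis.
Set Implicit Arguments. Unset Strict Implicit. Unset Printing Implicit Defensive.
Import Order.TTheory GRing.Theory Num.Theory.
Import numFieldNormedType.Exports.
Local Open Scope classical_set_scope.
Local Open Scope ring_scope.

Section Pricing.
Variable R : realType.

(* Valuation: v q theta = value of a buyer of type theta for quantity q.
   Only q in [0,1] is meaningful. *)
Definition valuation := R -> R -> R.

(* A menu is a finite list of (quantity, price) pairs; the trivial option
   (0,0) is always available and is not part of the list. *)
Definition menu := seq (R * R).

Definition concave01 (f : R -> R) : Prop :=
  forall x y t : R, 0 <= x <= 1 -> 0 <= y <= 1 -> 0 <= t <= 1 ->
    t * f x + (1 - t) * f y <= f (t * x + (1 - t) * y).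

Definition valid_valuation (v : valuation) : Prop :=
  [/\ (forall th, concave01 (fun q => v q th)),
      (forall th, v 0 th = 0),
      (forall q th, 0 <= q <= 1 -> v q th <= 1) &
      (forall th1 th2 q1 q2, th1 < th2 -> 0 <= q1 -> q1 < q2 -> q2 <= 1 ->
         v q2 th1 - v q1 th1 < v q2 th2 - v q1 th2)].

Definition assumption_lambda (v : valuation) (lam : R) : Prop :=
  0 < lam /\
  forall th, exists2 d : R,
    (fun h : R => (v h th - v 0 th) / h) @ (0:R)^'+ --> d
    & d < lam.

Definition menu_in01 (M : menu) : Prop := forall o, o \in M -> 0 <= o.1 <= 1.

Definition monotone_menu (M : menu) : Prop :=
  forall oi oj, oi \in M -> oj \in M -> oi.1 < oj.1 -> oi.2 <= oj.2.

Definition utility (v : valuation) (th : R) (o : R * R) : R := v o.1 th - o.2.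

Definition option_profit (c : R) (o : R * R) : R :=
  o.2 - (if o.1 == 0 then 0 else c).

(* Profit collected from a buyer of type th: the buyer picks a
   utility-maximising option among (0,0) :: M; ties are broken in favour of
   the seller (maximum profit among the buyer's maximisers). *)
Definition buyer_profit (v : valuation) (c : R) (M : menu) (th : R) : R :=
  let opts := (0, 0) :: M in
  let U := \big[Num.max/utility v th (0, 0)]_(o <- M) utility v th o in
  let best := [seq o <- opts | utility v th o == U] in
  \big[Num.max/option_profit c (head (0, 0) best)]_(o <- best)
     option_profit c o.

Definition Rev (P : probability R R) (v : valuation) (c : R) (M : menu)
  : \bar R := (\int[P]_th (buyer_profit v c M th)%:E)%E.

End Pricing.

(* Main.v *)
Require Import Defs.
From HB Require Import structures.
From mathcomp Require Import all_boot all_order all_algebra.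
From mathcomp Require Import all_classical all_reals all_analysis.
From mathcomp Require Import measurable_realfun.
From mathcomp Require Import ring lra zify.
Import Order.TTheory GRing.Theory Num.Theory.
Import numFieldNormedType.Exports.
Local Open Scope classical_set_scope.
Local Open Scope ring_scope.

Section Aux.
Variable R : realType.

Lemma maxrE (x y : R) : Num.max x y = x \/ Num.max x y = y.
Proof. by rewrite /Num.max; case: ifP; [right|left]. Qed.

Lemma bigmax_ge_idx (I : Type) (s : seq I) (F : I -> R) x :
  x <= \big[Num.max/x]_(i <- s) F i.
Proof.
elim: s => [|y s IH]; first by rewrite big_nil.
by rewrite big_cons le_max IH orbT.
Qed.

Lemma bigmax_ge (I : eqType) (s : seq I) (F : I -> R) x o :
  o \in s -> F o <= \big[Num.max/x]_(i <- s) F i.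
Proof.
elim: s => // y s IH; rewrite inE big_cons => /orP [/eqP->|/IH H].
  by rewrite le_max lexx.
by rewrite le_max H orbT.
Qed.

Lemma bigmax_att (I : eqType) (s : seq I) (F : I -> R) x :
  \big[Num.max/x]_(i <- s) F i = x \/
  exists2 o, o \in s & \big[Num.max/x]_(i <- s) F i = F o.
Proof.
elim: s => [|y s IH]; first by left; rewrite big_nil.
rewrite big_cons; have [->|->] := maxrE (F y) (\big[Num.max/x]_(i <- s) F i).
  by right; exists y => //; rewrite inE eqxx.
case: IH => [->|[w win ->]]; first by left.
by right; exists w => //; rewrite inE win orbT.
Qed.

Lemma bigmax_le (I : eqType) (s : seq I) (F : I -> R) x y :
  x <= y -> (forall o, o \in s -> F o <= y) -> \big[Num.max/x]_(i <- s) F i <= y.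
Proof.
move=> xy H; case: (bigmax_att _ s F x) => [->//|[w win ->]]; exact: H.
Qed.

Lemma sum_abs_ge (I : eqType) (s : seq I) (F : I -> R) o :
  o \in s -> `|F o| <= \sum_(i <- s) `|F i|.
Proof.
elim: s => // y s IH; rewrite inE big_cons => /orP [/eqP->|/IH H].
  by rewrite lerDl sumr_ge0.
by rewrite (le_trans H) // lerDr.
Qed.

Lemma count_lt (T : eqType) (P Q : pred T) (s : seq T) x :
  (forall y, P y -> Q y) -> x \in s -> Q x -> ~~ P x -> (count P s < count Q s)%N.
Proof.
move=> PQ; elim: s => // y s IH; rewrite inE => /orP [/eqP<-|xs] Qx nPx /=.
  have : (count P s <= count Q s)%N by apply: sub_count.
  by rewrite Qx (negbTE nPx) /=; lia.
have := IH xs Qx nPx; case: (P y) (PQ y) => [-> //|_] /=; case: (Q y) => /=; lia.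
Qed.


Lemma bp_char (v : valuation R) c (M : menu R) th :
  let U := \big[Num.max/utility v th (0, 0)]_(w <- M) utility v th w in
  [/\ (forall w : R * R, w \in (0, 0) :: M -> utility v th w <= U),
      (exists2 a : R * R, a \in (0, 0) :: M &
          utility v th a = U /\ buyer_profit v c M th = option_profit c a) &
      (forall w : R * R, w \in (0, 0) :: M -> utility v th w = U ->
          option_profit c w <= buyer_profit v c M th)].
Proof.
move=> U.
have Hmax : forall w, w \in (0, 0) :: M -> utility v th w <= U.
  move=> w; rewrite inE => /orP[/eqP->|wM]; first exact: bigmax_ge_idx.
  exact: bigmax_ge.
have Hatt : exists2 a, a \in (0, 0) :: M & utility v th a = U.
  case: (bigmax_att _ M (utility v th) (utility v th (0, 0))) => [E|[w wM E]].
    by exists (0, 0); rewrite ?inE ?eqxx // E.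
  by exists w; rewrite ?inE ?wM ?orbT // E.
rewrite /buyer_profit -/U.
set best := [seq w <- (0, 0) :: M | utility v th w == U].
have memb : forall w, (w \in best) = (w \in (0, 0) :: M) && (utility v th w == U).
  by move=> w; rewrite mem_filter andbC.
split => //.
- case: Hatt => a0 a0in a0U.
  have hb : head (0, 0) best \in best.
    case: best memb => [|h t] memb' /=; last by rewrite inE eqxx.
    by move: (memb' a0); rewrite in_nil a0in a0U eqxx.
  case: (bigmax_att _ best (option_profit c) (option_profit c (head (0, 0) best)))
     => [->|[w win ->]].
    move: hb; rewrite memb => /andP[h1 /eqP h2]; by exists (head (0,0) best).
  move: win; rewrite memb => /andP[h1 /eqP h2]; by exists w.
- move=> w win wU; apply: bigmax_ge; by rewrite memb win wU eqxx.
Qed.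

Lemma conc0 (f : R -> R) x y : concave01 f -> f 0 = 0 -> 0 < x -> x <= y -> y <= 1 ->
  x * f y <= y * f x.
Proof.
move=> cf f0 x0 xy y1.
have y0 : 0 < y by apply: lt_le_trans xy.
have h01 : 0 <= x / y <= 1.
  apply/andP; split; first by rewrite divr_ge0 // ltW.
  by rewrite ler_pdivrMr // mul1r.
have H1 : 0 <= y <= 1 by rewrite ltW.
have H0 : 0 <= (0:R) <= 1 by rewrite lexx ler01.
have := cf y 0 (x / y) H1 H0 h01.
rewrite f0 !mulr0 !addr0 divfK ?gt_eqF // => H.
have e : x * f y = y * (x / y * f y) by rewrite mulrA (mulrC y) divfK // gt_eqF.
by rewrite e ler_pM2l.
Qed.

Lemma conc1 (f : R -> R) x y e : concave01 f -> f 0 = 0 -> 0 < x -> x <= y -> y <= 1 ->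
  0 <= e -> y <= (1 + e) * x -> f y <= 1 -> f y - f x <= e.
Proof.
move=> cf f0 x0 xy y1 e0 ye fy1.
have H := conc0 _ _ _ cf f0 x0 xy y1.
have y0 : 0 < y by apply: lt_le_trans xy.
case: (leP (f y) 0) => fy.
  have : y * f y <= y * f x.
    apply: le_trans H; rewrite ler_wnM2r //.
  rewrite ler_pM2l // => h; lra.
have h2 : y * (f y - f x) <= y * e.
  have : (y - x) * f y <= y - x by rewrite ler_piMr // ?subr_ge0.
  nra.
move: h2; rewrite ler_pM2l //.
Qed.

Lemma conc2 (f : R -> R) x y z : concave01 f -> 0 <= x -> x <= y -> y < z -> z <= 1 ->
  f y < f z -> f x <= f y.
Proof.
move=> cf x0 xy yz z1 fyz.
case: (eqVneq x y) => [->//|xny].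
have xy' : x < y by rewrite lt_neqAle xny.
have zx : 0 < z - x by rewrite subr_gt0 (lt_trans xy').
set t := (y - x) / (z - x).
have t0 : 0 < t by rewrite divr_gt0 // subr_gt0.
have t1 : t < 1 by rewrite ltr_pdivrMr // mul1r ltrD2r.
have ht : t * z + (1 - t) * x = y.
  rewrite /t; field; by rewrite gt_eqF.
have Hz : 0 <= z <= 1 by rewrite z1 andbT (le_trans x0) // ltW // (le_lt_trans xy).
have Hx : 0 <= x <= 1 by rewrite x0 /= (le_trans xy) // ltW // (lt_le_trans yz).
have Ht : 0 <= t <= 1 by rewrite !ltW.
have := cf z x t Hz Hx Ht; rewrite ht => H.
rewrite leNgt; apply/negP => fxy.
nra.
Qed.

Lemma vlam (v : valuation R) lam th q : concave01 (fun w => v w th) -> v 0 th = 0 ->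
  assumption_lambda v lam -> 0 < q -> q <= 1 -> v q th <= lam * q.
Proof.
move=> cf v0 [lam0 /(_ th) [d hd dl]] q0 q1.
suff : v q th / q <= d.
  rewrite ler_pdivrMr // => h; apply: (le_trans h); rewrite ler_pM2r //; exact: ltW.
have <- : lim ((fun h : R => (v h th - v 0 th) / h) @ (0:R)^'+) = d.
  exact: cvg_lim.
apply: limr_ge; first by apply/cvg_ex; exists d.
near=> h.
have h0 : 0 < h by near: h; exact: nbhs_right_gt.
have hq : h <= q by near: h; exact: nbhs_right_le.
rewrite v0 subr0 ler_pdivrMr // mulrAC ler_pdivlMr //.
have := conc0 (fun w => v w th) _ _ cf v0 h0 hq q1 => /=.
by rewrite mulrC (mulrC q).
Unshelve. all: end_near.
Qed.

Lemma bern (e : R) n : 0 <= e -> 1 + n%:R * e <= (1 + e) ^+ n.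
Proof.
move=> e0; elim: n => [|n IH]; first by rewrite mul0r addr0 expr0.
rewrite exprS -natr1 mulrDl mul1r.
have h1 : 1 <= (1 + e) ^+ n by apply: exprn_ege1; rewrite lerDl.
nra.
Qed.

Lemma grid_ex (e q : R) : 0 < e -> e <= q ->
  exists l : nat, e * (1 + e) ^+ l <= q < e * (1 + e) ^+ l.+1.
Proof.
move=> e0 eq.
have q0 : 0 <= q by rewrite (le_trans (ltW e0)).
have [n hn] : exists n : nat, q < e * (1 + e) ^+ n.
  have := archi_boundP (divr_ge0 q0 (ltW (mulr_gt0 e0 e0))).
  set N := Num.bound _ => hN; exists N.
  have := bern e N (ltW e0).
  move: hN; rewrite ltr_pdivrMr ?mulr_gt0 // => hN hB.
  nra.
have ex : exists n, q < e * (1 + e) ^+ n by exists n.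
case: (ex_minnP ex) => m hm hmin.
case: m hm hmin => [|l] hm hmin.
  by move: hm; rewrite expr0 mulr1 ltNge eq.
exists l; rewrite hm andbT leNgt; apply/negP => hl.
by have := hmin _ hl; rewrite ltnn.
Qed.

Lemma floor_round (e x : R) : 0 < e ->
  x - e < e * (Num.floor (x / e))%:~R <= x.
Proof.
move=> e0; apply/andP; split.
  have := floorD1_gt (x / e); rewrite intrD => h.
  have : x < e * ((Num.floor (x / e))%:~R + 1).
    by rewrite -ltr_pdivrMl // mulrC.
  lra.
by rewrite -ler_pdivlMl // mulrC floor_le.
Qed.

Lemma meas_bigmax (I : Type) (s : seq I) (G : I -> R -> R) (G0 : R -> R) :
  measurable_fun setT G0 -> (forall i, measurable_fun setT (G i)) ->
  measurable_fun setT (fun th => \big[Num.max/G0 th]_(i <- s) G i th).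
Proof.
move=> m0 mG; elim: s => [|y s IH].
  by under eq_fun do rewrite big_nil.
under eq_fun do rewrite big_cons.
exact: measurable_maxr.
Qed.

Lemma utility_meas (v : valuation R) w : (forall q, measurable_fun setT (v q)) ->
  measurable_fun setT (fun th => utility v th w).
Proof. move=> mv; exact: measurable_funB. Qed.

Lemma bp_bound (v : valuation R) c M th :
  `|buyer_profit v c M th| <= \sum_(w <- (0,0) :: M) `|option_profit c w|.
Proof.
case: (bp_char v c M th) => _ [a ain [_ ->]] _; exact: sum_abs_ge.
Qed.

Lemma bp_meas (v : valuation R) c M : (forall q, measurable_fun setT (v q)) ->
  measurable_fun setT (buyer_profit v c M).
Proof.
move=> mv.
set m0 := - \sum_(w <- (0,0) :: M) `|option_profit c w|.
pose U th := \big[Num.max/utility v th (0, 0)]_(w <- M) utility v th w.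
have -> : buyer_profit v c M = fun th => \big[Num.max/m0]_(w <- (0,0) :: M)
    (if utility v th w == U th then option_profit c w else m0).
  apply: funext => th.
  case: (bp_char v c M th) => _ [a ain [aU bpa]] H3.
  have m0le : m0 <= buyer_profit v c M th.
    rewrite /m0 bpa lerNl; apply: le_trans (sum_abs_ge _ _ _ _ ain).
    by rewrite -normrN ler_norm.
  apply/eqP; rewrite eq_le; apply/andP; split.
    apply: (le_trans _ (bigmax_ge _ _ _ _ _ ain)).
    by rewrite -/(U th) aU eqxx bpa.
  apply: bigmax_le => // w win.
  case: ifP => // /eqP wU; exact: H3.
apply: meas_bigmax; first exact: measurable_cst.
move=> w; apply: measurable_fun_ifT; last exact: measurable_cst.
  apply: measurable_fun_eqr; first exact: utility_meas.
  apply: meas_bigmax => *; exact: utility_meas.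
exact: measurable_cst.
Qed.

Lemma int_bdd (P : probability R R) (f : R -> R) K : measurable_fun setT f ->
  (forall x, `|f x| <= K) -> P.-integrable setT (EFin \o f).
Proof.
move=> mf hK; apply: measurable_bounded_integrable => //.
  have h1 := probability_setT P.
  by move: h1 => /= ->; rewrite ltry.
exists K; split => [|y Ky x _ /=].
  by rewrite realE (le_trans _ (hK 0)).
exact: le_trans (hK x) (ltW Ky).
Qed.

Lemma rev_le (P : probability R R) v c M M' E :
  (forall q, measurable_fun setT (v q)) ->
  (forall th, buyer_profit v c M th - E <= buyer_profit v c M' th) ->
  (Rev P v c M - E%:E <= Rev P v c M')%E.
Proof.
move=> mv H.
have iM := int_bdd P _ _ (bp_meas v c M mv) (bp_bound v c M).
have iM' := int_bdd P _ _ (bp_meas v c M' mv) (bp_bound v c M').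
have iE : P.-integrable setT (EFin \o (fun _ : R => E)).
  apply: (@int_bdd P _ `|E|) => //; exact: measurable_cst.
have mB : measurable_fun setT (fun th => buyer_profit v c M th - E).
  apply: measurable_funB; [exact: bp_meas | exact: measurable_cst].
have iB := int_bdd P _ _ mB (fun x => le_trans (ler_normB _ _) (lerD (bp_bound v c M x) (lexx _))).
have -> : (E%:E = \int[P]_th (E%:E))%E.
  by rewrite integral_cst //; have h1 := probability_setT P; move: h1 => /= ->; rewrite mule1.
rewrite /Rev -integralB_EFin //.
under eq_integral do rewrite -EFinB.
apply: le_integral => //.
move=> x _; rewrite lee_fin; exact: H.
Qed.


Variables (v : valuation R) (c lam eps : R) (M : menu R) (g : R -> nat).
Hypotheses (vv : valid_valuation v) (c0 : 0 <= c) (lam0 : 0 < lam)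
  (VL : forall th q, 0 < q -> q <= 1 -> v q th <= lam * q)
  (e0 : 0 < eps) (in01 : menu_in01 M) (mono : monotone_menu M)
  (Hg : forall q, eps <= q ->
     eps * (1 + eps) ^+ (g q) <= q < eps * (1 + eps) ^+ (g q).+1).

Definition rk (w : R * R) := count (fun j : R * R => j.1 < w.1) M.
Definition dl (w : R * R) : R := 3 * eps * ((rk w)%:R + 2).
Definition img (w : R * R) : R * R :=
  (eps * (1 + eps) ^+ (g w.1), eps * (Num.floor ((w.2 - dl w) / eps))%:~R).
Arguments img : simpl never.
Definition M' := [seq img w | w <- M & (eps <= w.1) && (c <= w.2)].

Lemma img_q w : eps <= w.1 ->
  [/\ 0 < (img w).1, (img w).1 <= w.1 & w.1 <= (1 + eps) * (img w).1].
Proof.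
move=> ew; have /andP[h1 h2] := Hg _ ew.
rewrite /img /=; split => //.
- by rewrite mulr_gt0 // exprn_gt0 // ltr_wpDr // ltW.
- by move: h2; rewrite exprS mulrCA => /ltW.
Qed.

Lemma img_p w : w.2 - dl w - eps < (img w).2 <= w.2 - dl w.
Proof. by rewrite /img; exact: floor_round. Qed.

Lemma dlb w : 6 * eps <= dl w <= 3 * eps * ((size M)%:R + 2).
Proof.
rewrite /dl; have : (rk w <= size M)%N by apply: count_size.
rewrite -(ler_nat R) => hk.
have : 0 <= (rk w)%:R :> R by [].
move=> h0.
have h3 : 0 <= eps * (rk w)%:R by rewrite mulr_ge0 // ltW.
have h4 : 0 <= eps * ((size M)%:R - (rk w)%:R) by rewrite mulr_ge0 ?subr_ge0 // ltW.
apply/andP; split; nra.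
Qed.

Lemma vval th w : eps <= w.1 -> w.1 <= 1 -> v w.1 th - eps <= v (img w).1 th.
Proof.
move=> ew w1; case: vv => vc v0 v1 _.
have [q1 q2 q3] := img_q _ ew.
have := conc1 (fun q => v q th) _ _ _ (vc th) (v0 th) q1 q2 w1 (ltW e0) q3.
have : v w.1 th <= 1 by apply: v1; rewrite w1 andbT (le_trans (ltW e0)).
move=> h1 h2; have := h2 h1; lra.
Qed.

Lemma ar1 (A a2 D e U : R) : A - a2 + D - e <= U -> 0 <= A - a2 -> 6 * e <= D ->
  0 < e -> U <= 0 -> False.
Proof. lra. Qed.

Lemma pointwise th :
  buyer_profit v c M th - (lam * eps + eps * (3 * (size M)%:R + 7))
  <= buyer_profit v c M' th.
Proof.
have vv' := vv; case: vv' => vc v0 v1 _.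
have v0' := v0 th.
set k := size M.
have le0 : 0 < lam * eps by rewrite mulr_gt0.
have plb : forall w : R * R, w \in (0,0) :: M' ->
    - (eps * (3 * k%:R + 7)) <= option_profit c w.
  move=> w; rewrite inE => /orP[/eqP->|].
    rewrite /option_profit /= eqxx subr0 oppr_le0.
    by rewrite mulr_ge0 ?ltW // addr_ge0 // mulr_ge0.
  case/mapP => w0; rewrite mem_filter => /andP[/andP[ew cw] w0M] ->.
  have [hq1 hq2 hq3] := img_q _ ew.
  rewrite /option_profit (gt_eqF hq1).
  have /andP[/= p1 p2] := img_p w0; have /andP[d1 d2] := dlb w0; lra.
case: (bp_char v c M th) => Hmax [[a1 a2] ain [aU bpa]] _.
case: (bp_char v c M' th) => Hmax' [b' bin [bU bpb]] _.
rewrite bpa bpb.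
case: (lerP (option_profit c (a1, a2)) (lam * eps)) => hpa.
  have := plb _ bin; lra.
have u00 : utility v th (0,0) = 0 by rewrite /utility /= v0' subr0.
have Ua0 : 0 <= v a1 th - a2.
  by have := Hmax (0,0) (mem_head _ _); rewrite -aU u00.
have aM : (a1, a2) \in M.
  move: ain; rewrite inE => /orP[/eqP ea|//].
  by move: hpa; rewrite ea /option_profit /= eqxx subr0 => h; lra.
have /andP[/= a10 a11] := in01 _ aM.
have ea : eps <= a1.
  rewrite leNgt; apply/negP => h.
  case: (eqVneq a1 0) => [a0|an0].
    move: hpa Ua0; rewrite /option_profit /= a0 eqxx v0' subr0 sub0r.
    move=> h1 h2; lra.
  have apos : 0 < a1 by rewrite lt_neqAle eq_sym an0 a10.
  have := VL th _ apos a11; move: hpa; rewrite /option_profit /= (negbTE an0) /=.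
  have : lam * a1 <= lam * eps by rewrite ler_pM2l // ltW.
  move=> h1 h2 h3.
  have t1 : v a1 th <= lam * eps by apply: le_trans h3 h1.
  have t2 : a2 <= v a1 th by rewrite -subr_ge0.
  have t3 : a2 < a2 - c by apply: le_lt_trans t2 (le_lt_trans t1 h2).
  move: t3 c0; lra.
have an0 : a1 != 0 by rewrite gt_eqF // (lt_le_trans e0).
have ca : c <= a2.
  by move: hpa; rewrite /option_profit /= (negbTE an0) => h; lra.
have a'M : img (a1, a2) \in M' by apply: map_f; rewrite mem_filter /= ea ca aM.
have ua' : v a1 th - a2 + dl (a1, a2) - eps <= utility v th (img (a1, a2)).
  have /andP[/= p1 p2] := img_p (a1, a2); have := vval th (a1, a2) ea a11; rewrite /utility /=; lra.
have hb'ne : b' != (0,0).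
  apply/eqP => eb.
  have hU : utility v th (img (a1, a2)) <= 0.
    by have := Hmax' (img (a1, a2)); rewrite inE a'M orbT -bU eb u00 => /(_ isT).
  have /andP[d1 d2] := dlb (a1, a2).
  exact: (ar1 _ _ _ _ _ ua' Ua0 d1 e0 hU).
have [[b1 b2]] : exists2 b : R * R, b \in [seq w <- M | (eps <= w.1) && (c <= w.2)] & b' = img b.
  by apply/mapP; move: bin; rewrite inE (negbTE hb'ne).
rewrite mem_filter /= => /andP[/andP[eb cb] bM] eb'.
subst b'.
have /andP[/= b10 b11] := in01 _ bM.
have [qb1 qb2 qb3] := img_q (b1, b2) eb.
have /andP[/= pb1 pb2] := img_p (b1, b2).
have bn0 : (img (b1, b2)).1 != 0 by rewrite gt_eqF.
case: (lerP a2 b2) => hab.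
  rewrite /option_profit (negbTE bn0) /= (negbTE an0) /=.
  have /andP[d1 d2] := dlb (b1, b2); lra.
exfalso.
have ub : v b1 th - b2 <= v a1 th - a2.
  by have := Hmax (b1, b2); rewrite inE bM orbT -aU => /(_ isT).
have hba : b1 < a1.
  have : ~~ (a1 < b1) by apply/negP => h; have := mono _ _ aM bM h => /=; lra.
  rewrite -leNgt le_eqVlt => /orP[/eqP e|//].
  by move: ub; rewrite e; lra.
have hrk : (rk (b1, b2) < rk (a1, a2))%N.
  apply: (@count_lt _ (fun j : R * R => j.1 < b1) (fun j : R * R => j.1 < a1) M (b1, b2)).
  - by move=> y h; exact: lt_trans h hba.
  - exact: bM.
  - exact: hba.
  - by rewrite /= ltxx.
have hdl : dl (b1, b2) + 3 * eps <= dl (a1, a2).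
  rewrite /dl; move: hrk; rewrite -(ler_nat R) -natr1 => h; nra.
have vba : v b1 th < v a1 th by lra.
have vq : v (img (b1, b2)).1 th <= v b1 th.
  exact: (conc2 (fun q => v q th) _ _ _ (vc th) (ltW qb1) qb2 hba a11 vba).
have := Hmax' (img (a1, a2)); rewrite inE a'M orbT -bU => /(_ isT).
move: vq pb1 pb2 ua' hdl; rewrite /utility /=; lra.
Qed.

End Aux.

Theorem lemma5 (R : realType) :
  exists C : R, forall (P : probability R R) (v : valuation R) (c lam : R),
    0 <= c ->
    valid_valuation v ->
    (forall q, measurable_fun [set: R] (v q)) ->
    assumption_lambda v lam ->
    forall (eps : R) (k : nat) (M : menu R),
      0 < eps < 1 -> (1 <= k)%N ->
      uniq M -> size M = k -> menu_in01 M -> monotone_menu M ->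
      exists M' : menu R,
        [/\ (size M' <= k)%N,
            (forall o, o \in M' ->
               (exists z : int, o.2 = eps * z%:~R) /\
               (exists l : nat, o.1 = eps * (1 + eps) ^+ l)),
            menu_in01 M' &
            (Rev P v c M - (C * (k%:R + lam) * eps)%:E <= Rev P v c M')%E].
Proof.
exists 10.
move=> P v c lam c0 vv mv hl eps k M /andP[e0 e1] k1 uM sM in01 mono.
have vv' := vv; case: vv' => vc v0 v1 _.
have lam0 : 0 < lam by case: hl.
have VL : forall th q, 0 < q -> q <= 1 -> v q th <= lam * q.
  move=> th q q0 q1; exact: (vlam _ _ _ _ _ (vc th) (v0 th) hl q0 q1).
have [g Hg] : {g : R -> nat & forall q, eps <= q ->
    eps * (1 + eps) ^+ (g q) <= q < eps * (1 + eps) ^+ (g q).+1}.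
  apply: (@choice R nat (fun q l => eps <= q ->
    eps * (1 + eps) ^+ l <= q < eps * (1 + eps) ^+ l.+1)) => q; case: (lerP eps q) => h.
    by have [l hl'] := grid_ex _ _ _ e0 h; exists l.
  by exists 0%N.
exists (M' _ c eps M g); split.
- rewrite size_map size_filter -sM; exact: count_size.
- move=> w /mapP [w0 _ ->]; split.
    by exists (Num.floor ((w0.2 - dl _ eps M w0) / eps)).
  by exists (g w0.1).
- move=> w /mapP [w0 + ->]; rewrite mem_filter => /andP[/andP[ew _] w0M].
  have [q1 q2 _] := img_q _ eps M g e0 Hg w0 ew.
  have /andP[_ w01] := in01 _ w0M.
  by apply/andP; split; [exact: ltW | exact: le_trans q2 w01].
- apply: rev_le => // th.
  have := pointwise _ _ _ _ _ _ _ vv c0 lam0 VL e0 in01 mono Hg th.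
  apply: le_trans; rewrite lerD2l lerN2 sM.
  have hk : 1 <= k%:R :> R by rewrite ler1n.
  nra.
Qed.
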